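(* Let $p$ be an odd prime and $q\in\mathbb C_p$ with $|1-q|_p<p^{-1/(p-1)}$. For $n\in\mathbb Z_+$ and $x\in\mathbb Z_p$, $$E_{n,q}(x)=2\sum_{l=0}^n\sum_{k=l}^n\sum_{\substack{l_0+\cdots+l_k=n-k\\ l_0,\dots,l_k\in\mathbb Z_+}}q^{\sum_{i=0}^k il_i}\frac{1}{(1-q)^{n+l-k}}s_{1,q}(k,l)(-1)^k\frac{q^{lx}}{1+q^l}.$$
   Context: $[x]_q=\frac{1-q^x}{1-q}$. The fermionic $p$-adic integral of a uniformly differentiable $f:\mathbb Z_p\to\mathbb C_p$ is $\int_{\mathbb Z_p}f(y)\,d\mu_{-1}(y)=\lim_{N\to\infty}\sum_{y=0}^{p^N-1}f(y)(-1)^y$. The $q$-Euler polynomials are $E_{n,q}(x)=\int_{\mathbb Z_p}[x+y]_q^n\,d\mu_{-1}(y)$. The $q$-Stirling numbers of the first kind $s_{1,q}(k,l)$ are defined by $[x]_q[x-1]_q\cdots[x-k+1]_q=q^{-\binom k2}\sum_{l=0}^k s_{1,q}(k,l)[x]_q^l$, as an identity of polynomials in $[x]_q$ (using $[x-i]_q=q^{-i}([x]_q-[i]_q)$). *)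

(* Defs.v *)
From HB Require Import structures.
From mathcomp Require Import all_boot all_order all_algebra.
From mathcomp Require Import reals exp.
From Stdlib Require Import ClassicalEpsilon.
Set Implicit Arguments. Unset Strict Implicit. Unset Printing Implicit Defensive.
Import Order.TTheory GRing.Theory Num.Theory.

(* x : padic_int p is the sequence (x mod p^N)_N, with x_{N+1} mod p^N = x_N.    *)
Record padic_int (p : nat) := MkZp {
  zdig :> nat -> nat;
  zdigP : forall N, (zdig N.+1 %% p ^ N = zdig N)%N }.

Lemma nat_to_Zp_proof (p y : nat) (N : nat) :
  ((y %% p ^ N.+1) %% p ^ N = y %% p ^ N)%N.
Proof. by rewrite modn_dvdm // dvdn_exp2l. Qed.

Definition nat_to_Zp (p : nat) (y : nat) : padic_int p :=
  @MkZp p (fun N => (y %% p ^ N)%N) (nat_to_Zp_proof p y).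

Lemma zp_add_proof (p : nat) (x y : padic_int p) (N : nat) :
  (((x N.+1 + y N.+1) %% p ^ N.+1) %% p ^ N = (x N + y N) %% p ^ N)%N.
Proof.
rewrite modn_dvdm ?dvdn_exp2l // -(zdigP x N) -(zdigP y N).
by rewrite modnDm.
Qed.

Definition zp_add (p : nat) (x y : padic_int p) : padic_int p :=
  @MkZp p (fun N => ((x N + y N) %% p ^ N)%N) (zp_add_proof x y).

Local Open Scope ring_scope.

Section Valued.
Variables (R : realType) (K : fieldType) (abs : K -> R).

Definition cvg_to (u : nat -> K) (L : K) : Prop :=
  forall e : R, 0 < e -> exists N, forall m, (N <= m)%N -> abs (u m - L) < e.

Definition cauchy (u : nat -> K) : Prop :=
  forall e : R, 0 < e -> exists N, forall m k, (N <= m)%N -> (N <= k)%N ->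
    abs (u m - u k) < e.

Record padic_abs (p : nat) : Prop := {
  abs_ge0 : forall x, 0 <= abs x;
  abs_eq0 : forall x, abs x = 0 -> x = 0;
  abs_0 : abs 0 = 0;
  abs_mul : forall x y, abs (x * y) = abs x * abs y;
  abs_ultra : forall x y, abs (x + y) <= Num.max (abs x) (abs y);
  abs_p : abs p%:R = (p%:R)^-1;
  abs_complete : forall u, cauchy u -> exists L, cvg_to u L }.

Definition qpowZp (p : nat) (q : K) (x : padic_int p) : K :=
  epsilon (inhabits 0) (fun L => cvg_to (fun N => q ^+ x N) L).

Definition qint_Zp (p : nat) (q : K) (x : padic_int p) : K := (1 - qpowZp q x) / (1 - q).
Definition qint_nat (q : K) (i : nat) : K := (1 - q ^+ i) / (1 - q).

Definition fermionic_integral (p : nat) (f : padic_int p -> K) : K :=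
  epsilon (inhabits 0) (fun L =>
    cvg_to (fun N => \sum_(y < p ^ N) f (nat_to_Zp p y) * (-1) ^+ y) L).

Definition Enq (p : nat) (q : K) (n : nat) (x : padic_int p) : K :=
  fermionic_integral (fun y => qint_Zp q (zp_add x y) ^+ n).

End Valued.

(* q-Stirling numbers of the first kind:  [x]_q[x-1]_q...[x-k+1]_q
   = q^{-C(k,2)} sum_l s_{1,q}(k,l) [x]_q^l, where [x-i]_q = q^{-i}([x]_q-[i]_q);
   i.e. s_{1,q}(k,l) is the l-th coefficient of
   q^{C(k,2)} prod_{i<k} q^{-i} (X - [i]_q). *)
Definition s1q (K : fieldType) (q : K) (k l : nat) : K :=
  (q ^+ 'C(k, 2) *: \prod_(i < k) (q ^- i *: ('X - (qint_nat q i)%:P))) `_ l.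

(* Main.v *)
Require Import Defs.
From HB Require Import structures.
From mathcomp Require Import all_boot all_order all_algebra.
From mathcomp Require Import reals exp.
From mathcomp Require Import ring zify.
From Stdlib Require Import ClassicalEpsilon.
Set Implicit Arguments. Unset Strict Implicit. Unset Printing Implicit Defensive.
Import Order.TTheory GRing.Theory Num.Theory.
Local Open Scope ring_scope.


Section Newton.
Variables (R : comNzRingType) (x : nat -> R).

Definition Spol (N : nat) (a : R) : {poly R} := \sum_(j < N.+1) a ^+ j *: 'X^j.
Definition Hc (N m k : nat) : R := (\prod_(i < k.+1) Spol N (x i))`_m.
Definition Pk (Z : {poly R}) (k : nat) : {poly R} := \prod_(i < k) (Z - (x i)%:P).

Lemma coefS N a j : (j <= N)%N -> (Spol N a)`_j = a ^+ j.
Proof.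
move=> hj; rewrite /Spol coef_sum.
rewrite (bigD1 (Ordinal (hj : (j < N.+1)%N))) //= coefZ coefXn eqxx mulr1.
rewrite big1 ?addr0 // => i /negbTE hi; rewrite coefZ coefXn.
have -> : (j == i) = false.
  by apply/negbTE; apply: contraFN hi => /eqP hji; apply/eqP/val_inj.
by rewrite mulr0.
Qed.

Lemma coef0S N a : (Spol N a)`_0 = 1.
Proof. by rewrite coefS. Qed.

Lemma H0k N k : Hc N 0 k = 1.
Proof. by rewrite /Hc coef0_prod big1 // => i _; rewrite coef0S. Qed.

Lemma Hm0 N m : (m <= N)%N -> Hc N m 0 = x 0 ^+ m.
Proof. by move=> hm; rewrite /Hc big_ord1 coefS. Qed.

Lemma HS N m k : (m <= N)%N ->
  Hc N m k.+1 = \sum_(j < m.+1) Hc N j k * x k.+1 ^+ (m - j).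
Proof.
move=> hm; rewrite /Hc big_ord_recr /= coefM; apply: eq_bigr => j _.
by rewrite coefS // (leq_trans (leq_subr _ _) hm).
Qed.

Lemma Hrec N m k : (m.+1 <= N)%N ->
  Hc N m.+1 k.+1 = Hc N m.+1 k + x k.+1 * Hc N m k.+1.
Proof.
move=> hm; have hm' : (m <= N)%N by apply: ltnW.
rewrite !HS // big_ord_recr /= subnn expr0 mulr1 addrC.
congr (_ + _); rewrite mulr_sumr; apply: eq_bigr => j _.
have hj : (j <= m)%N by rewrite -ltnS.
by rewrite (subSn hj) exprS mulrCA.
Qed.

Lemma H_trunc M N m k : (m <= M)%N -> (m <= N)%N -> Hc M m k = Hc N m k.
Proof.
elim: k m => [|k IH] m hM hN; first by rewrite !Hm0.
rewrite !HS //; apply: eq_bigr => j _; rewrite IH //.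
  exact: leq_trans (ltnSE (ltn_ord j)) hM.
exact: leq_trans (ltnSE (ltn_ord j)) hN.
Qed.

Lemma PkS Z k : Pk Z k.+1 = Pk Z k * (Z - (x k)%:P).
Proof. by rewrite /Pk big_ord_recr. Qed.

Lemma newton N Z n : (n <= N)%N ->
  Z ^+ n = \sum_(k < n.+1) Hc N (n - k) k *: Pk Z k.
Proof.
elim: n => [|n IH] hn.
  by rewrite big_ord1 H0k scale1r /Pk big_ord0.
have e1 : forall k, Z * Pk Z k = Pk Z k.+1 + x k *: Pk Z k.
  move=> k; rewrite PkS mulrBr -mul_polyC [_ * Z]mulrC [_ * (x k)%:P]mulrC subrK.
  done.
have hn' : (n <= N)%N by apply: ltnW.
rewrite exprS (IH hn') mulr_sumr.
under eq_bigr do rewrite -scalerAr e1 scalerDr scalerA.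
rewrite big_split /=.
rewrite [X in X + _]big_ord_recr /= subnn H0k.
rewrite [X in _ + X]big_ord_recl /=.
rewrite [RHS]big_ord_recl [in RHS]big_ord_recr /= /bump /=.
rewrite !subn0 subSS subnn H0k (Hm0 hn) (Hm0 hn') exprSr.
set A := \sum_(i < n) Hc N (n - i) i *: Pk Z i.+1.
set B := 1 *: Pk Z n.+1.
set C := (x 0 ^+ n * x 0) *: Pk Z 0.
rewrite [C + _]addrC addrACA [B + _]addrC addrACA -[RHS]addrA [B + C]addrC; congr (_ + _).
rewrite /A -big_split /=; apply: eq_bigr => i _.
have hk : (i < n)%N := ltn_ord i.
rewrite -scalerDl; congr (_ *: _).
rewrite subSS -[(n - i)%N](subnSK hk) Hrec; last by rewrite subnSK // (leq_trans (leq_subr _ _) hn').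
by rewrite mulrC.
Qed.


End Newton.

Section Alg.
Variables (K : fieldType) (q : K).
Hypotheses (hq0 : q != 0) (hq1 : q != 1).

Definition Zp : {poly K} := 1 - (1 - q) *: 'X.
Definition S1poly k : {poly K} :=
  q ^+ 'C(k, 2) *: \prod_(i < k) (q ^- i *: ('X - (qint_nat q i)%:P)).

Lemma fac k : Zp - (q ^+ k)%:P = (q - 1) *: ('X - (qint_nat q k)%:P).
Proof.
have h1 : 1 - q != 0 by rewrite subr_eq0 eq_sym.
have hk : (q - 1) * qint_nat q k = q ^+ k - 1.
  by rewrite /qint_nat; field.
rewrite scalerBr scale_polyC hk /Zp polyCB polyC1 scalerBl scale1r.
rewrite scalerBl scale1r.
set X1 := (q *: 'X : {poly K}); set Y := ((q ^+ k)%:P : {poly K}).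
ring.
Qed.

Lemma Pk_S1 k : Pk (fun i => q ^+ i) Zp k = (q - 1) ^+ k *: S1poly k.
Proof.
elim: k => [|k IH].
  by rewrite /Pk /S1poly !big_ord0 bin0n !expr0 !scale1r.
rewrite PkS IH fac /S1poly big_ord_recr /= binS bin1.
rewrite -scalerAr -!scalerAl -scalerAr !scalerA.
congr (_ *: _).
have hu : q ^+ k \is a GRing.unit by rewrite unitfE expf_neq0.
rewrite exprD -mulrA mulrK // exprS; ring.
Qed.

Lemma size_S1 k : (size (S1poly k) <= k.+1)%N.
Proof.
rewrite /S1poly (leq_trans (size_scale_leq _ _)) //.
elim: k => [|k IH]; first by rewrite big_ord0 size_poly1.
rewrite big_ord_recr /= (leq_trans (size_polyMleq _ _)) //.
have h2 : (size (q ^- k *: ('X - (qint_nat q k)%:P)) <= 2)%N.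
  by rewrite (leq_trans (size_scale_leq _ _)) ?size_XsubC.
move: IH h2; set a := size _; set b := size _; lia.
Qed.

Lemma s1q_zero k l : (k < l)%N -> s1q q k l = 0.
Proof.
move=> hkl; rewrite /s1q -/(S1poly k) nth_default //.
exact: leq_trans (size_S1 k) hkl.
Qed.

Lemma Gsum M m k :
  \sum_(t : {ffun 'I_k.+1 -> 'I_M.+1} | (\sum_(i < k.+1) (t i : nat) == m)%N)
     q ^+ (\sum_(i < k.+1) i * t i)%N = Hc (fun i => q ^+ i) M m k.
Proof.
rewrite /Hc /Spol bigA_distr_bigA /= coef_sum big_mkcond /=.
apply: eq_bigr => f _.
rewrite scaler_prod prodrXr coefZ coefXn eq_sym.
case: eqP => _; rewrite ?mulr0 ?mulr1 //.
rewrite -prodrXr; apply: eq_bigr => i _; by rewrite -exprM.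
Qed.

Lemma coefZn n l : (Zp ^+ n)`_l = (q - 1) ^+ l *+ 'C(n, l).
Proof.
have -> : Zp = (q - 1)%:P * 'X + 1 by rewrite /Zp mul_polyC addrC -scaleNr opprB.
rewrite exprD1n coef_sum.
under eq_bigr do rewrite coefMn exprMn -rmorphXn mul_polyC coefZ coefXn.
case: (leqP l n) => hl.
  rewrite (bigD1 (Ordinal (hl : (l < n.+1)%N))) //= eqxx mulr1 big1 ?addr0 //.
  move=> i /negbTE hi.
  have -> : (l == i) = false.
    by apply/negbTE; apply: contraFN hi => /eqP hji; apply/eqP/val_inj.
  by rewrite mulr0 mul0rn.
rewrite bin_small // mulr0n big1 // => i _.
have -> : (l == i) = false.
  by apply/negbTE; rewrite neq_ltn (leq_ltn_trans _ hl) ?orbT // -ltnS.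
by rewrite mulr0 mul0rn.
Qed.

Lemma coef_id n l : (q - 1) ^+ l *+ 'C(n, l) =
  \sum_(k < n.+1) Hc (fun i => q ^+ i) n (n - k) k * ((q - 1) ^+ k * s1q q k l).
Proof.
rewrite -coefZn (newton (fun i => q ^+ i) _ (leqnn n)) coef_sum; apply: eq_bigr => k _.
by rewrite Pk_S1 /s1q !coefZ.
Qed.

Lemma ext_range (F : nat -> K) l n : (l <= n)%N ->
  (forall k, (k < l)%N -> F k = 0) ->
  \sum_(l <= k < n) F k = \sum_(k < n) F k.
Proof.
move=> hl F0; rewrite -(big_mkord xpredT F) (big_cat_nat (leq0n l) hl) /=.
have -> : \sum_(0 <= k < l) F k = 0.
  by rewrite big_nat_cond big1 // => k /andP[/andP[_ hk] _]; exact: F0.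
by rewrite add0r.
Qed.

Lemma stepB n Qx :
  \sum_(l < n.+1) ((- Qx) ^+ l *+ 'C(n, l)) / (1 - q) ^+ n * (2 / (1 + q ^+ l)) =
  2 * \sum_(0 <= l < n.+1) \sum_(l <= k < n.+1)
        \sum_(t : {ffun 'I_k.+1 -> 'I_(n - k).+1}
              | (\sum_(i < k.+1) (t i : nat) == n - k)%N)
          q ^+ (\sum_(i < k.+1) i * t i)%N / (1 - q) ^+ (n + l - k)
          * s1q q k l * (-1) ^+ k
          * (Qx ^+ l / (1 + q ^+ l)).
Proof.
have hc : 1 - q != 0 by rewrite subr_eq0 eq_sym.
rewrite big_mkord mulr_sumr; apply: eq_bigr => l _.
have hl : (l <= n.+1)%N by apply: ltnW.
rewrite ext_range //; last first.
  move=> k hk; rewrite big1 // => t _; rewrite s1q_zero //; rewrite mulr0 !mul0r //.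
under eq_bigr => k _ do rewrite -!mulr_suml Gsum
   (@H_trunc _ _ (n - k) n (n - k) k (leqnn _) (leq_subr _ _)).
rewrite -mulr_suml.
have key : \sum_(k < n.+1) Hc (fun i => q ^+ i) n (n - k) k / (1 - q) ^+ (n + l - k)
     * s1q q k l * (-1) ^+ k = 'C(n, l)%:R * (-1) ^+ l / (1 - q) ^+ n.
  transitivity ((\sum_(k < n.+1) Hc (fun i => q ^+ i) n (n - k) k
                  * ((q - 1) ^+ k * s1q q k l)) / (1 - q) ^+ (n + l)).
    rewrite mulr_suml; apply: eq_bigr => k _.
    have hk : (k <= n)%N by rewrite -ltnS.
    have e : (n + l = (n + l - k) + k)%N by lia.
    have hqc : q - 1 = - (1 - q) by rewrite opprB.
    rewrite [in RHS]e exprD hqc [(- (1 - q)) ^+ k]exprNn.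
    have hA : (1 - q) ^+ (n + l - k) != 0 by rewrite expf_neq0.
    have hB : (1 - q) ^+ k != 0 by rewrite expf_neq0.
    move: hA hB; set A := (1 - q) ^+ (n + l - k); set B := (1 - q) ^+ k => hA hB.
    by field; rewrite hA hB.
  have hqc : q - 1 = - (1 - q) by rewrite opprB.
  rewrite -coef_id hqc [(- (1 - q)) ^+ l]exprNn exprD -mulr_natl.
  have hA : (1 - q) ^+ n != 0 by rewrite expf_neq0.
  have hB : (1 - q) ^+ l != 0 by rewrite expf_neq0.
  move: hA hB; set A := (1 - q) ^+ n; set B := (1 - q) ^+ l => hA hB.
  by field; rewrite hA hB.
rewrite key [(- Qx) ^+ l]exprNn -mulr_natl.
set A := (1 - q) ^+ n; set B := 1 + q ^+ l.
ring.
Qed.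
End Alg.


Section Abs.
Variables (R : realType) (K : fieldType) (abs : K -> R) (p : nat).
Hypotheses (Ha : padic_abs abs p) (pp : prime p) (po : odd p).

Lemma abs1 : abs 1 = 1.
Proof.
have h := abs_mul Ha 1 1; rewrite mulr1 in h.
have h0 : abs 1 != 0.
  by apply/eqP => /(abs_eq0 Ha) /eqP; rewrite oner_eq0.
by apply: (mulfI h0); rewrite mulr1 -h.
Qed.

Lemma absN1 : abs (-1) = 1.
Proof.
have h := abs_mul Ha (-1) (-1); rewrite mulrNN mulr1 abs1 in h.
have : abs (-1) ^+ 2 == 1 by rewrite expr2 -h.
rewrite sqrf_eq1 => /orP [/eqP //|/eqP h1].
have := abs_ge0 Ha (-1); rewrite h1 ler0N1 //.
Qed.

Lemma absN x : abs (- x) = abs x.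
Proof. by rewrite -mulN1r (abs_mul Ha) absN1 mul1r. Qed.

Lemma absB x y : abs (x - y) = abs (y - x).
Proof. by rewrite -opprB absN. Qed.

Lemma absX x n : abs (x ^+ n) = abs x ^+ n.
Proof.
elim: n => [|n IH]; first by rewrite !expr0 abs1.
by rewrite !exprS (abs_mul Ha) IH.
Qed.

Lemma absV x : abs (x^-1) = (abs x)^-1.
Proof.
have [->|hx] := eqVneq x 0; first by rewrite invr0 (abs_0 Ha) invr0.
have h := abs_mul Ha x x^-1; rewrite mulfV // abs1 in h.
have hx' : abs x != 0 by apply/eqP => /(abs_eq0 Ha) /eqP; rewrite (negbTE hx).
by apply: (mulfI hx'); rewrite -h mulfV.
Qed.

Lemma ultra_le x y B : abs x <= B -> abs y <= B -> abs (x + y) <= B.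
Proof.
move=> hx hy; apply: le_trans (abs_ultra Ha x y) _.
by rewrite ge_max hx hy.
Qed.

Lemma ultra_lt x y B : abs x < B -> abs y < B -> abs (x + y) < B.
Proof.
move=> hx hy; apply: le_lt_trans (abs_ultra Ha x y) _.
by rewrite gt_max hx hy.
Qed.

Lemma abs_sum (I : Type) (r : seq I) (P : pred I) (F : I -> K) B :
  0 <= B -> (forall i, P i -> abs (F i) <= B) ->
  abs (\sum_(i <- r | P i) F i) <= B.
Proof.
move=> hB hF; elim/big_rec: _ => [|i y Pi hy]; first by rewrite (abs_0 Ha).
exact: ultra_le (hF i Pi) hy.
Qed.

Lemma abs_nat n : abs n%:R <= 1.
Proof.
elim: n => [|n IH]; first by rewrite (abs_0 Ha).
by rewrite mulrS; apply: ultra_le; rewrite ?abs1.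
Qed.

Lemma abs_lt_eq x y : abs y < abs x -> abs (x + y) = abs x.
Proof.
move=> hxy; apply/eqP; rewrite eq_le; apply/andP; split.
  by apply: ultra_le => //; apply: ltW.
have := abs_ultra Ha (x + y) (- y); rewrite addrK absN.
rewrite le_max => /orP [//|h].
by have := lt_le_trans hxy h; rewrite ltxx.
Qed.

Lemma p_gt1 : (1 < p)%N. Proof. exact: prime_gt1. Qed.

Definition u : R := (p%:R)^-1.

Lemma u_gt0 : 0 < u.
Proof. by rewrite /u invr_gt0 ltr0n prime_gt0. Qed.

Lemma u_lt1 : u < 1.
Proof. by rewrite /u invf_lt1 ?ltr0n ?prime_gt0 // ltr1n p_gt1. Qed.

Lemma abs2 : abs 2 = 1.
Proof.
set m := p./2.
have hp : p.+1 = (2 * m.+1)%N.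
  have := odd_double_half p; rewrite po -addnn /=; lia.
have e : (1 : K) = 2 * (m.+1)%:R - p%:R.
  by rewrite -natrM -hp -addn1 natrD addrC addKr.
have h2 : abs 2 <= 1 by apply: (abs_nat 2).
apply/eqP; rewrite eq_le h2 /=; rewrite leNgt; apply/negP => hlt.
have : abs (2 * (m.+1)%:R + - p%:R) < 1.
  apply: ultra_lt.
    apply: (le_lt_trans _ hlt); rewrite (abs_mul Ha); apply: ler_piMr; [exact: (abs_ge0 Ha) | exact: abs_nat].
  by rewrite (absN (p%:R)) (abs_p Ha) u_lt1.
by rewrite -e abs1 ltxx.
Qed.


Lemma small_lt1 d : 0 <= d -> d ^+ p.-1 < u -> d < 1.
Proof.
move=> hd h; rewrite ltNge; apply/negP => h1.
have := exprn_ege1 p.-1 h1 => h2.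
by have := lt_le_trans (lt_le_trans u_lt1 h2) (ltW h); rewrite ltxx.
Qed.

Lemma key_step a : abs (a - 1) ^+ p.-1 < u ->
  abs (a ^+ p - 1) <= abs (a - 1) * u.
Proof.
set d := abs (a - 1) => hd.
have d0 : 0 <= d by apply: (abs_ge0 Ha).
have d1 : d < 1 by apply: small_lt1.
have ea : a ^+ p - 1 = \sum_(i < p) (a - 1) ^+ i.+1 *+ 'C(p, i.+1).
  by rewrite -{1}(subrK 1 a) exprD1n big_ord_recl /= expr0 bin0 mulr1n addrC addKr.
rewrite ea; apply: abs_sum; first by rewrite mulr_ge0 // ltW // u_gt0.
move=> i _.
have hip : (i.+1 <= p)%N := ltn_ord i.
rewrite leq_eqVlt in hip; case/orP: hip => [/eqP hip | hip].
  rewrite hip binn mulr1n absX -/d.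
  have hp1 : p = (p.-1).+1 by rewrite prednK // prime_gt0.
  rewrite hp1 exprS ler_pM // ?exprn_ge0 //; exact: ltW.
have /dvdnP [c hc] := prime_dvd_bin (k := i.+1) pp hip.
rewrite hc -mulr_natr natrM (abs_mul Ha) (abs_mul Ha) absX -/d (abs_p Ha) -/u.
have h1 : d ^+ i.+1 <= d.
  rewrite exprS; apply: ler_piMr => //; exact: exprn_ile1 (ltW d1).
have h2 : abs c%:R <= 1 by apply: abs_nat.
have h3 : 0 <= abs c%:R by apply: (abs_ge0 Ha).
rewrite mulrA; apply: ler_pM => //.
- by rewrite mulr_ge0 // exprn_ge0.
- exact: ltW u_gt0.
- by apply: le_trans h1; apply: ler_piMr => //; rewrite exprn_ge0.
Qed.

Variable q : K.
Hypothesis hr : abs (q - 1) ^+ p.-1 < u.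

Definition r := abs (q - 1).

Lemma r_ge0 : 0 <= r. Proof. exact: (abs_ge0 Ha). Qed.
Lemma r_lt1 : r < 1. Proof. exact: small_lt1 r_ge0 hr. Qed.

Lemma absq : abs q = 1.
Proof.
have -> : q = 1 + (q - 1) by rewrite addrC subrK.
by rewrite abs_lt_eq abs1 // r_lt1.
Qed.

Lemma absqn m : abs (q ^+ m) = 1.
Proof. by rewrite absX absq expr1n. Qed.

Lemma powq_close Q c : abs Q <= 1 -> abs (Q ^+ c - 1) <= abs (Q - 1).
Proof.
move=> hQ; rewrite subrX1 (abs_mul Ha) ler_piMr ?(abs_ge0 Ha) //.
by apply: abs_sum => // j _; rewrite absX exprn_ile1 // (abs_ge0 Ha).
Qed.

Lemma iterq N : abs (q ^+ (p ^ N) - 1) <= r * u ^+ N.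
Proof.
elim: N => [|N IH]; first by rewrite expn0 expr1 expr0 mulr1.
rewrite expnSr exprM.
have hle : abs (q ^+ (p ^ N) - 1) <= r.
  apply: le_trans IH _; apply: ler_piMr; first exact: r_ge0.
  by rewrite exprn_ile1 // ltW // (u_gt0, u_lt1).
apply: le_trans (key_step _) _.
  apply: le_lt_trans hr; apply: lerXn2r; rewrite ?nnegrE //; exact: (abs_ge0 Ha).
rewrite exprSr mulrA ler_pM //; first exact: (abs_ge0 Ha).
exact: ltW u_gt0.
Qed.


Lemma cong_close_le a b N : (a <= b)%N -> a = b %[mod p ^ N] ->
  abs (q ^+ a - q ^+ b) <= r * u ^+ N.
Proof.
move=> hab e.
have /dvdnP [c hc] : (p ^ N %| b - a)%N by rewrite -eqn_mod_dvd // eq_sym; apply/eqP.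
have eb : b = (c * p ^ N + a)%N by rewrite -hc subnK.
rewrite absB eb exprD mulnC exprM -{2}(mul1r (q ^+ a)) -mulrBl (abs_mul Ha) absqn mulr1.
apply: le_trans (powq_close _ _) (iterq N).
by rewrite absqn.
Qed.

Lemma cong_close a b N : a = b %[mod p ^ N] ->
  abs (q ^+ a - q ^+ b) <= r * u ^+ N.
Proof.
move=> e; case: (leqP a b) => h; first exact: cong_close_le.
by rewrite absB; apply: cong_close_le; [exact: ltnW|].
Qed.

Lemma exists_small e : 0 < e -> exists N, forall M, (N <= M)%N -> r * u ^+ M < e.
Proof.
move=> he.
have hre : 0 <= r / e by rewrite divr_ge0 // ?r_ge0 // ltW.
set N := Num.Def.archi_bound (r / e).
have hN := archi_boundP hre.
exists N => M hM.
have hpN : (N < p ^ N)%N by apply: ltn_expl; exact: p_gt1.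
have huM : u ^+ M <= u ^+ N.
  by apply: ler_wiXn2l => //; [exact: ltW u_gt0 | exact: ltW u_lt1].
have h1 : r * u ^+ M <= r * u ^+ N by apply: ler_wpM2l => //; exact: r_ge0.
apply: le_lt_trans h1 _.
rewrite /u exprVn mulrC -[X in _ < X]mulr1.
have hpN0 : 0 < (p%:R : R) ^+ N by rewrite exprn_gt0 // ltr0n prime_gt0.
rewrite mulrC ltr_pdivrMr // mulr1.
have -> : r = e * (r / e) by rewrite mulrC divfK // gt_eqF.
rewrite ltr_pM2l //; apply: lt_trans hN _.
by rewrite -natrX ltr_nat.
Qed.

Lemma cvg_unique (v : nat -> K) L L' :
  cvg_to abs v L -> cvg_to abs v L' -> L = L'.
Proof.
move=> h1 h2; apply/eqP; rewrite -subr_eq0; apply/eqP; apply: (abs_eq0 Ha); apply/eqP; rewrite eq_le (abs_ge0 Ha) andbT.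
rewrite leNgt; apply/negP => hd.
have [N1 hN1] := h1 _ hd; have [N2 hN2] := h2 _ hd.
have e : L - L' = (v (maxn N1 N2) - L') + - (v (maxn N1 N2) - L).
  by ring.
have h3 : abs (- (v (maxn N1 N2) - L)) < abs (L - L').
  by rewrite absN; apply: hN1; exact: leq_maxl.
suff : abs (L - L') < abs (L - L') by rewrite ltxx.
rewrite {1}e; exact: ultra_lt (hN2 _ (leq_maxr _ _)) h3.
Qed.

Lemma zdig_lt (x : padic_int p) N : (x N < p ^ N)%N.
Proof. by rewrite -(zdigP x N) ltn_pmod // expn_gt0 prime_gt0. Qed.

Lemma zdig_mod (x : padic_int p) N M : (N <= M)%N -> (x M %% p ^ N)%N = x N.
Proof.
elim: M => [|M IH] h.
  by rewrite leqn0 in h; move/eqP: h => ->; rewrite modn_small // zdig_lt.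
rewrite leq_eqVlt in h; case/orP: h => [/eqP <-|h].
  by rewrite modn_small // zdig_lt.
rewrite -(IH h) -(zdigP x M) modn_dvdm //.
by rewrite dvdn_exp2l.
Qed.

Lemma qpow_cvg (x : padic_int p) :
  cvg_to abs (fun N => q ^+ x N) (qpowZp abs q x).
Proof.
rewrite /qpowZp; apply: (epsilon_spec (inhabits 0)).
apply: (abs_complete Ha) => e he.
have [N hN] := exists_small he.
exists N => m k hm hk.
apply: le_lt_trans (hN N (leqnn N)).
by apply: cong_close; rewrite !zdig_mod.
Qed.

Lemma abs_Qx (x : padic_int p) : abs (qpowZp abs q x) <= 1.
Proof.
have [N hN] := qpow_cvg x ltr01.
have h := hN N (leqnn N).
have -> : qpowZp abs q x = q ^+ x N + - (q ^+ x N - qpowZp abs q x).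
  by rewrite opprB addrC subrK.
by apply: ultra_le; rewrite ?absqn // absN ltW.
Qed.

Lemma qpow_add (x : padic_int p) (y : nat) :
  qpowZp abs q (zp_add x (nat_to_Zp p y)) = qpowZp abs q x * q ^+ y.
Proof.
apply: (cvg_unique (qpow_cvg _)) => e he /=.
have [N1 hN1] := qpow_cvg x he.
have [N2 hN2] := exists_small he.
exists (maxn N1 N2) => m hm.
have e1 : q ^+ ((x m + y %% p ^ m) %% p ^ m) - qpowZp abs q x * q ^+ y =
   (q ^+ ((x m + y %% p ^ m) %% p ^ m) - q ^+ (x m + y)) +
   (q ^+ x m - qpowZp abs q x) * q ^+ y.
  by rewrite exprD mulrBl addrA subrK.
rewrite e1; apply: ultra_lt.
  apply: le_lt_trans (hN2 m _); last by apply: leq_trans hm; exact: leq_maxr.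
  by apply: cong_close; rewrite modnDmr modn_mod.
rewrite (abs_mul Ha) absqn mulr1; apply: hN1.
by apply: leq_trans hm; exact: leq_maxl.
Qed.


Lemma geom (a : K) M : odd M -> (1 + a) * \sum_(y < M) (- a) ^+ y = 1 + a ^+ M.
Proof.
move=> hM; have h := subrX1 (- a) M.
have hneg : (- a) ^+ M = - a ^+ M.
  by rewrite exprNn -signr_odd hM expr1 mulN1r.
rewrite hneg in h; move: h; set S := \sum_(y < M) _ => h.
have -> : (1 + a) * S = - ((- a - 1) * S) by ring.
by rewrite -h; ring.
Qed.

Lemma abs_1pqj j : abs (1 + q ^+ j) = 1.
Proof.
have -> : 1 + q ^+ j = 2 + (q ^+ j - 1) by ring.
rewrite abs_lt_eq abs2 //.
apply: le_lt_trans (powq_close _ _) r_lt1.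
by rewrite absq.
Qed.

Lemma one_pqj_neq0 j : 1 + q ^+ j != 0.
Proof. by apply/eqP => h; have := abs_1pqj j; rewrite h (abs_0 Ha) => /eqP; rewrite eq_sym oner_eq0. Qed.

Lemma Enq_eq (x : padic_int p) n : q != 1 ->
  Enq abs q n x = \sum_(j < n.+1) ((- qpowZp abs q x) ^+ j *+ 'C(n, j))
      / (1 - q) ^+ n * (2 / (1 + q ^+ j)).
Proof.
move=> hq1.
set Qx := qpowZp abs q x; set c := 1 - q.
have hc : c != 0 by rewrite /c subr_eq0 eq_sym.
set b := fun j : nat => (- Qx) ^+ j *+ 'C(n, j).
have pt : forall y : nat, qint_Zp abs q (zp_add x (nat_to_Zp p y)) ^+ n * (-1) ^+ y
    = \sum_(j < n.+1) b j / c ^+ n * (- q ^+ j) ^+ y.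
  move=> y; rewrite /qint_Zp qpow_add -/Qx -/c expr_div_n.
  have -> : (1 - Qx * q ^+ y) ^+ n = \sum_(j < n.+1) b j * (q ^+ j) ^+ y.
    rewrite addrC -mulNr exprD1n; apply: eq_bigr => j _.
    by rewrite exprMn exprAC mulrnAl.
  rewrite mulr_suml mulr_suml; apply: eq_bigr => j _.
  rewrite [(- q ^+ j) ^+ y]exprNn; ring.
have sN : forall N, \sum_(y < p ^ N) qint_Zp abs q (zp_add x (nat_to_Zp p y)) ^+ n * (-1) ^+ y
    = \sum_(j < n.+1) b j / c ^+ n * ((1 + (q ^+ j) ^+ (p ^ N)) / (1 + q ^+ j)).
  move=> N; under eq_bigr do rewrite pt.
  rewrite exchange_big /=; apply: eq_bigr => j _.
  rewrite -mulr_sumr; congr (_ * _).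
  apply: (mulfI (one_pqj_neq0 j)); rewrite geom; last by rewrite oddX po orbT.
  by rewrite mulrC divfK // one_pqj_neq0.
set V := \sum_(j < n.+1) b j / c ^+ n * (2 / (1 + q ^+ j)).
have hcv : cvg_to abs (fun N => \sum_(y < p ^ N)
    qint_Zp abs q (zp_add x (nat_to_Zp p y)) ^+ n * (-1) ^+ y) V.
  move=> e he.
  set Cc := abs ((c ^+ n)^-1).
  have hCc : 0 <= Cc by apply: (abs_ge0 Ha).
  have hCc1 : 0 < Cc + 1 by apply: ltr_wpDl.
  have he' : 0 < e / (Cc + 1) by rewrite divr_gt0.
  have [N hN] := exists_small he'.
  exists N => m hm; rewrite sN /V -sumrB.
  have hb : forall j, abs (b j) <= 1.
    move=> j; rewrite /b -mulr_natr (abs_mul Ha) absX absN.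
    apply: mulr_ile1; rewrite ?exprn_ge0 ?(abs_ge0 Ha) ?abs_nat //.
    by rewrite exprn_ile1 ?(abs_ge0 Ha) ?abs_Qx.
  have hX : 0 <= r * u ^+ m by rewrite mulr_ge0 ?r_ge0 // exprn_ge0 // ltW // u_gt0.
  apply: le_lt_trans (_ : _ <= Cc * (r * u ^+ m)) _.
    apply: abs_sum => [|j _]; first by rewrite mulr_ge0.
    rewrite -mulrBr -mulrBl.
    have -> : 1 + (q ^+ j) ^+ (p ^ m) - 2 = (q ^+ (p ^ m)) ^+ j - 1 by rewrite exprAC; ring.
    rewrite !(abs_mul Ha) (absV (1 + q ^+ j)) abs_1pqj invr1 mulr1 -/Cc.
    rewrite -[X in _ <= X]mul1r mulrA; apply: ler_pM.
    - by rewrite mulr_ge0 // (abs_ge0 Ha).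
    - exact: (abs_ge0 Ha).
    - by rewrite !mul1r; apply: ler_piMl.
    - apply: le_trans (powq_close _ _) (iterq m); by rewrite absqn.
  apply: le_lt_trans (_ : _ <= (Cc + 1) * (r * u ^+ m)) _.
    by apply: ler_wpM2r => //; rewrite lerDl.
  rewrite mulrC -ltr_pdivlMr //; exact: hN.
rewrite /Enq /fermionic_integral.
apply: (cvg_unique (epsilon_spec (inhabits 0) _ (ex_intro _ V hcv)) hcv).
Qed.

End Abs.


Theorem mainTheorem5 (R : realType) (K : closedFieldType) (abs : K -> R)
    (p : nat) (q : K) (n : nat) (x : padic_int p) :
  prime p -> odd p -> padic_abs abs p -> q != 1 ->
  abs (1 - q) < (p%:R : R) `^ (- ((p - 1)%:R)^-1) ->
  Enq abs q n x =
  2 * \sum_(0 <= l < n.+1) \sum_(l <= k < n.+1)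
        \sum_(t : {ffun 'I_k.+1 -> 'I_(n - k).+1}
              | (\sum_(i < k.+1) (t i : nat) == n - k)%N)
          q ^+ (\sum_(i < k.+1) i * t i)%N / (1 - q) ^+ (n + l - k)
          * s1q q k l * (-1) ^+ k
          * (qpowZp abs q x ^+ l / (1 + q ^+ l)).
Proof.
move=> pp po Ha hq1 hlt.
have hp3 : (2 < p)%N.
  have := prime_gt1 pp; rewrite leq_eqVlt => /orP [/eqP h|//].
  by move: po; rewrite -h.
have hr : abs (q - 1) ^+ p.-1 < u R p.
  have r0 : 0 <= abs (q - 1) by apply: (abs_ge0 Ha).
  set k : R := (p - 1)%:R.
  have hk : 0 < k by rewrite /k ltr0n subn_gt0 ltnW.
  have P0 : 0 <= (p%:R : R) by rewrite ler0n.
  rewrite -subn1 -powR_mulrn // -/k /u.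
  have -> : (p%:R : R)^-1 = ((p%:R : R) `^ (- k^-1)) `^ k.
    by rewrite -powRrM mulNr mulVf ?gt_eqF // powR_inv1.
  apply: gt0_ltr_powR => //; rewrite ?nnegrE ?powR_ge0 //.
  by rewrite (absB Ha).
have hq0 : q != 0.
  by apply/eqP => h; have := absq Ha pp hr; rewrite h (abs_0 Ha) => /eqP; rewrite eq_sym oner_eq0.
rewrite (Enq_eq Ha pp po hr x n hq1).
exact: stepB hq0 hq1 n (qpowZp abs q x).
Qed.
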